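(* Let $\mathcal{A}$ be any algorithm in the $\mathsf{LOCAL}$ model that solves the distributed spanning tree reconfiguration problem in one step of $1$-simultaneous add and delete, i.e., for every connected graph $G=(V,E)$ and every pair of spanning trees $T_1, T_2$ of $G$ (given as input as described in the context), $\mathcal{A}$ outputs a valid single-step $1$-simultaneous add and delete reconfiguration schedule from $T_1$ to $T_2$. Then $\mathcal{A}$ requires $\Omega(n)$ rounds in the worst case, where $n$ is the number of nodes of the graph.
   Context: The $\mathsf{LOCAL}$ model: the communication network is an $n$-node graph $G$ whose nodes have unique identifiers; computation proceeds in synchronous rounds, in each of which every node may send a message of arbitrary size to each of its neighbours in $G$ and perform arbitrary local computation; the running time is the number of rounds. Distributed spanning tree reconfiguration problem: given a connected graph $G=(V,E)$ (which is the communication network) and two spanning trees $T_1,T_2$ of $G$, each node $v\in V$ initially knows only its own incident edges in $T_1$ and in $T_2$ (the trees are unrooted: no parent pointers are given). A $k$-simultaneous add and delete step applied to a spanning tree $T$ consists of each node $v$ choosing a set $A_v$ of at most $k$ edges incident to $v$ to add and a set $D_v$ of at most $k$ edges incident to $v$ (in $T$) to delete, such that no edge belongs to $A_u$ and $A_w$ for two different nodes $u\ne w$ and no edge belongs to $D_u$ and $D_w$ for two different nodes $u\neq w$; the result is $(T\setminus \bigcup_v D_v)\cup \bigcup_v A_v$. A valid single-step $k$-simultaneous add and delete reconfiguration schedule from $T_1$ to $T_2$ is one such step applied to $T_1$ whose result is exactly $T_2$; the algorithm must output it distributedly, i.e., each node $v$ outputs its own sets $A_v$ and $D_v$. *)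

(* Defs.v *)
From mathcomp Require Import all_boot.
Set Implicit Arguments. Unset Strict Implicit. Unset Printing Implicit Defensive.

Definition simple_graph n (G : rel 'I_n) : Prop := irreflexive G /\ symmetric G.

Definition connected_graph n (G : rel 'I_n) : Prop := forall u v, connect G u v.

Definition acyclic n (T : rel 'I_n) : Prop :=
  ~ exists p : seq 'I_n, [/\ cycle T p, uniq p & 3 <= size p].

Definition spanning_tree n (G T : rel 'I_n) : Prop :=
  [/\ symmetric T, subrel T G, connected_graph T & acyclic T].

(* A single 1-simultaneous add and delete step from T1 yielding exactly T2.
   A v (resp. D v) is the set of other endpoints u of the edges {v,u} that
   node v adds (resp. deletes). *)
Definition valid_step1 n (G T1 T2 : rel 'I_n) (A D : 'I_n -> {set 'I_n}) : Prop :=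
  [/\ forall v, #|A v| <= 1,
      forall v, #|D v| <= 1,
      forall v u, u \in A v -> G v u,
      forall v u, u \in D v -> T1 v u &
      (forall v u, ~ (u \in A v /\ v \in A u))] /\
  [/\ forall v u, ~ (u \in D v /\ v \in D u) &
      forall u v, T2 u v =
        (T1 u v && ~~ ((u \in D v) || (v \in D u))) || ((u \in A v) || (v \in A u))].

(* Deterministic LOCAL algorithm with arbitrary state type S and message type M.
   la_init n myid nbrs : initial state, knowing n, own identifier and, for each
     G-neighbour (listed in increasing identifier order), its identifier and
     whether the incident edge lies in T1 and in T2;
   la_send s j : message sent to the neighbour with identifier j;
   la_recv s msgs : new state after receiving (sender id, message) pairs;
   la_out s : (identifiers of the A_v endpoints, identifiers of the D_v endpoints). *)
Record local_algo (S M : Type) := LocalAlgo {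
  la_init : nat -> nat -> seq (nat * bool * bool) -> S;
  la_send : S -> nat -> M;
  la_recv : S -> seq (nat * M) -> S;
  la_out : S -> seq nat * seq nat }.

Definition nbrs n (G : rel 'I_n) (id : 'I_n -> nat) (v : 'I_n) : seq 'I_n :=
  sort (fun a b => id a <= id b) [seq u <- enum 'I_n | G v u].

Fixpoint la_state S M (A : local_algo S M) n (G T1 T2 : rel 'I_n)
    (id : 'I_n -> nat) (r : nat) (v : 'I_n) : S :=
  match r with
  | 0 => la_init A n (id v) [seq (id u, T1 v u, T2 v u) | u <- nbrs G id v]
  | r'.+1 =>
      la_recv A (la_state A G T1 T2 id r' v)
        [seq (id u, la_send A (la_state A G T1 T2 id r' u) (id v)) | u <- nbrs G id v]
  end.

Definition la_output S M (A : local_algo S M) n (G T1 T2 : rel 'I_n)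
    (id : 'I_n -> nat) (t : nat) (v : 'I_n) : seq nat * seq nat :=
  la_out A (la_state A G T1 T2 id t v).

Definition output_ok n (G : rel 'I_n) (id : 'I_n -> nat) (v : 'I_n) (o : seq nat * seq nat) :=
  [/\ size o.1 <= 1, size o.2 <= 1,
      all (fun x => has (fun u => id u == x) (nbrs G id v)) o.1 &
      all (fun x => has (fun u => id u == x) (nbrs G id v)) o.2].

Definition out_add n (G : rel 'I_n) (id : 'I_n -> nat) (o : 'I_n -> seq nat * seq nat)
  (v : 'I_n) : {set 'I_n} := [set u | G v u && (id u \in (o v).1)].
Definition out_del n (G : rel 'I_n) (id : 'I_n -> nat) (o : 'I_n -> seq nat * seq nat)
  (v : 'I_n) : {set 'I_n} := [set u | G v u && (id u \in (o v).2)].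

Definition solves_in S M (A : local_algo S M) (T : nat -> nat) : Prop :=
  forall n (G T1 T2 : rel 'I_n) (id : 'I_n -> nat),
    simple_graph G -> connected_graph G -> injective id ->
    spanning_tree G T1 -> spanning_tree G T2 ->
    let o := la_output A G T1 T2 id (T n) in
    (forall v, output_ok G id v (o v)) /\
    valid_step1 G T1 T2 (out_add G id o) (out_del G id o).

(* Main.v *)
Require Import Defs.
From mathcomp Require Import all_boot zify.
Set Implicit Arguments. Unset Strict Implicit. Unset Printing Implicit Defensive.


Section Loc.
Variables (S M : Type) (A : local_algo S M).
Variables (n : nat) (G T1 T2 : rel 'I_n) (id : 'I_n -> nat)
          (G' T1' T2' : rel 'I_n) (id' : 'I_n -> nat) (phi : 'I_n -> 'I_n).

Definition Cg (u : 'I_n) : Prop :=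
  [/\ id' (phi u) = id u,
      nbrs G' id' (phi u) = map phi (nbrs G id u) &
      forall w, G u w -> [/\ id' (phi w) = id w, T1' (phi u) (phi w) = T1 u w &
                            T2' (phi u) (phi w) = T2 u w]].

Fixpoint Dg (r : nat) (u : 'I_n) : Prop :=
  match r with 0 => Cg u | r'.+1 => Cg u /\ forall w, G u w -> Dg r' w end.

Lemma Dg_C r u : Dg r u -> Cg u. Proof. by case: r => [|r] //= []. Qed.

Lemma Dg_mono r u : Dg r.+1 u -> Dg r u.
Proof.
elim: r u => [|r IH] u /= [Cu H] //; split=> // w /H; exact: IH.
Qed.

Lemma mem_nbrs u w : w \in nbrs G id u -> G u w.
Proof. by rewrite /nbrs mem_sort mem_filter => /andP[]. Qed.

Lemma locality r u : Dg r u ->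
  la_state A G' T1' T2' id' r (phi u) = la_state A G T1 T2 id r u.
Proof.
elim: r u => [|r IH] u.
  move=> [h1 h2 h3] /=; rewrite h1 h2 -map_comp; congr la_init.
  apply/eq_in_map => w /mem_nbrs /h3 [e1 e2 e3] /=; by rewrite e1 e2 e3.
move=> Du; have [h1 h2 h3] := Dg_C Du.
rewrite /= IH; last exact: Dg_mono.
rewrite h2 -map_comp h1; congr la_recv; apply/eq_in_map => w /mem_nbrs Guw /=.
have [e1 _ _] := h3 _ Guw; rewrite e1 IH //.
by case: Du => _ /(_ _ Guw).
Qed.
End Loc.


Section Gr.
Variable n : nat.
Definition Gq : rel 'I_n := fun u w => (u != w) && (nat_of_ord u < nat_of_ord w + 3) && (nat_of_ord w < nat_of_ord u + 3).
Definition T1q : rel 'I_n := fun u w => (nat_of_ord u == (nat_of_ord w).+1) || (nat_of_ord w == (nat_of_ord u).+1).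
Definition T2q : rel 'I_n := fun u w =>
  [|| nat_of_ord u == nat_of_ord w + 2, nat_of_ord w == nat_of_ord u + 2 | nat_of_ord u + nat_of_ord w == 1].

Lemma acyclic_lower (T : rel 'I_n) : symmetric T ->
  (forall u a b, T u a -> T u b -> nat_of_ord a < nat_of_ord u -> nat_of_ord b < nat_of_ord u -> a = b) ->
  acyclic T.
Proof.
move=> Tsym Hlow [p [cp up sp]].
have [x0 x0p] : exists x0, x0 \in p by case: p {cp up} sp => [|x s] //= _; exists x; rewrite inE eqxx.
case: (@arg_maxnP _ x0 (mem p) (@nat_of_ord n) x0p) => m mp mmax.
case: (rot_to mp) => i s Hrot.
have cs : cycle T (m :: s) by rewrite -Hrot rot_cycle.
have us : uniq (m :: s) by rewrite -Hrot rot_uniq.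
have ss : 2 <= size s by have := size_rot i p; rewrite Hrot /=; lia.
have sub : forall y, y \in s -> nat_of_ord y < nat_of_ord m.
  move=> y ys; have yp : y \in p by rewrite -(mem_rot i) Hrot inE ys orbT.
  have hle : nat_of_ord y <= nat_of_ord m := mmax y yp.
  move: hle; rewrite leq_eqVlt => /orP[/eqP e|//].
  have eym : y = m by apply: ord_inj.
  by move: us; rewrite /= -eym ys.
case: s cs us ss sub {Hrot} => [|a [|b s2]] //= cs us _ sub.
case/and3P: cs => Tma _; rewrite rcons_path => /andP[_ Tl].
have lin : last b s2 \in b :: s2 by apply: mem_last.
have hne : last b s2 != a.
  apply/eqP => e; move: us; rewrite -e lin /=.
  by rewrite !andbF.
have := Hlow m a (last b s2) Tma; rewrite Tsym => /(_ Tl).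
have la : nat_of_ord a < nat_of_ord m by apply: sub; rewrite inE eqxx.
have ll : nat_of_ord (last b s2) < nat_of_ord m by apply: sub; rewrite inE lin orbT.
move=> /(_ la ll) e.
by move: hne; rewrite e eqxx.
Qed.

Lemma connected_lower (T : rel 'I_n) : symmetric T ->
  (forall v : 'I_n, 0 < nat_of_ord v -> exists2 w : 'I_n, nat_of_ord w < nat_of_ord v & T v w) ->
  connected_graph T.
Proof.
move=> Tsym H.
have H0 : forall k (v : 'I_n), nat_of_ord v <= k -> forall z : 'I_n, nat_of_ord z = 0 -> connect T v z.
  elim=> [|k IH] v hv z hz.
    by apply: eq_connect0; apply: ord_inj; rewrite hz; lia.
  case: (posnP (nat_of_ord v)) => [e|pos].
    by apply: eq_connect0; apply: ord_inj; rewrite hz e.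
  have [w lt Tvw] := H v pos.
  apply: connect_trans (connect1 Tvw) (IH w _ z hz); lia.
move=> u v.
have z : 'I_n by [].
have z0 : 0 < n by have := ltn_ord u; lia.
pose o := Ordinal z0.
apply: connect_trans (H0 _ u (leqnn _) o erefl) _.
rewrite (sym_connect_sym Tsym); exact: H0 _ v (leqnn _) o erefl.
Qed.

Lemma Gq_simple : simple_graph Gq.
Proof.
split; first by move=> u; rewrite /Gq eqxx.
move=> u w; rewrite /Gq eq_sym; apply/idP/idP => /andP[/andP[a b] c]; rewrite a /=; lia.
Qed.

Lemma T1q_sym : symmetric T1q.
Proof. by move=> u w; rewrite /T1q orbC. Qed.
Lemma T2q_sym : symmetric T2q.
Proof. move=> u w; rewrite /T2q; apply/idP/idP => /or3P[]/eqP e; apply/or3P;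
  [apply: Or32|apply: Or31|apply: Or33|apply: Or32|apply: Or31|apply: Or33]; apply/eqP; lia. Qed.

Lemma T1q_sub : subrel T1q Gq.
Proof.
move=> u w; rewrite /T1q /Gq => /orP[] /eqP e; apply/andP; split; try lia;
 apply/andP; split; try lia; apply/eqP => e2; rewrite e2 in e; lia.
Qed.
Lemma T2q_sub : subrel T2q Gq.
Proof.
move=> u w; rewrite /T2q /Gq => /or3P[] /eqP e; apply/andP; split; try lia;
 apply/andP; split; try lia; apply/eqP => e2; rewrite e2 in e; lia.
Qed.

Lemma T1q_tree : spanning_tree Gq T1q.
Proof.
split; [exact: T1q_sym| exact: T1q_sub| |].
  apply: connected_lower T1q_sym _ => v pos.
  have lt : (nat_of_ord v).-1 < n by have := ltn_ord v; lia.
  exists (Ordinal lt); rewrite /T1q /=; [lia | apply/orP; left; apply/eqP; lia].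
apply: acyclic_lower T1q_sym _ => u a b; rewrite /T1q => /orP[] /eqP e1 /orP[] /eqP e2 l1 l2;
  apply: ord_inj; lia.
Qed.

Lemma T2q_tree : spanning_tree Gq T2q.
Proof.
split; [exact: T2q_sym| exact: T2q_sub| |].
  apply: connected_lower T2q_sym _ => v pos.
  case: (leqP 2 (nat_of_ord v)) => h.
    have lt : (nat_of_ord v) - 2 < n by have := ltn_ord v; lia.
    exists (Ordinal lt); rewrite /T2q /=; [lia | apply/orP; left; apply/eqP; lia].
  have lt : 0 < n by have := ltn_ord v; lia.
  exists (Ordinal lt); rewrite /T2q /=; [lia | apply/orP; right; apply/orP; right; apply/eqP; lia].
apply: acyclic_lower T2q_sym _ => u a b; rewrite /T2q => /or3P[] /eqP e1 /or3P[] /eqP e2 l1 l2;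
  apply: ord_inj; lia.
Qed.

Lemma Gq_conn : connected_graph Gq.
Proof.
move=> u v; have [_ _ c _] := T1q_tree.
apply: (connect_sub _ (c u v)) => x y /T1q_sub; exact: connect1.
Qed.
End Gr.


Lemma ztest (a b c : nat) : (a == b.+1) || (b == a.+1) = ((c + a == c + b + 1) || (b == a + 1)).
Proof. apply/idP/idP; lia. Qed.

Lemma nbrs_map n (G G' : rel 'I_n) (id id' : 'I_n -> nat) (phi : 'I_n -> 'I_n) u :
  injective id -> injective id' ->
  (forall w, G u w -> id' (phi w) = id w) ->
  (forall w, G u w -> G' (phi u) (phi w)) ->
  (forall y, G' (phi u) y -> exists2 w, G u w & phi w = y) ->
  nbrs G' id' (phi u) = map phi (nbrs G id u).
Proof.
move=> iid iid' hid hG hG'.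
pose le' := fun a b : 'I_n => id' a <= id' b.
have tr : transitive le' by move=> x y z; rewrite /le'; lia.
have an : antisymmetric le'.
  by move=> x y; rewrite /le' => /andP[h1 h2]; apply: iid'; lia.
have tot : total le' by move=> x y; rewrite /le'; lia.
apply: (sorted_eq tr an).
- exact: sort_sorted.
- rewrite sorted_map.
  have hs := @sort_sorted _ (fun x y : 'I_n => id x <= id y) (fun x y => leq_total (id x) (id y)) [seq w <- enum 'I_n | G u w].
  rewrite /nbrs; rewrite (@eq_in_sorted _ (G u) _ (fun x y : 'I_n => id x <= id y)) //.
    by move=> x y hx hy /=; rewrite /le' hid // hid.
  by apply/allP => x; rewrite mem_sort mem_filter => /andP[].
- rewrite /nbrs perm_sort.
  rewrite perm_sym; apply: perm_trans (perm_map phi (permEl (perm_sort _ _))) _; rewrite perm_sym.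
  apply: uniq_perm.
  + apply: filter_uniq; exact: enum_uniq.
  + rewrite map_inj_in_uniq; first by apply: filter_uniq; exact: enum_uniq.
    move=> x y; rewrite !mem_filter => /andP[hx _] /andP[hy _] e.
    by apply: iid; rewrite -hid // -[id y]hid // e.
  + move=> y; rewrite mem_filter mem_enum andbT; apply/idP/mapP.
      by move=> /hG' [w hw <-]; exists w; rewrite // mem_filter hw mem_enum.
    by move=> [w]; rewrite mem_filter mem_enum andbT => hw ->; apply: hG.
Qed.


Section Propag.
Variables (n : nat) (D : 'I_n -> {set 'I_n}).
Hypothesis card1 : forall v, #|D v| <= 1.
Hypothesis edge : forall u w : 'I_n, 1 <= u -> nat_of_ord w = u.+1 -> (w \in D u) || (u \in D w).

Definition Lp (v : 'I_n) := [exists w : 'I_n, (w.+1 == v :> nat) && (w \in D v)].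
Definition Rp (v : 'I_n) := [exists w : 'I_n, (nat_of_ord w == v.+1) && (w \in D v)].

Lemma two_del v a b : a \in D v -> b \in D v -> a = b.
Proof.
move=> ha hb; apply/eqP; apply: contraT => ne.
have : #|[set a; b]| <= #|D v|.
  by apply: subset_leq_card; apply/subsetP => x; rewrite !inE => /orP[]/eqP->.
rewrite cards2 ne; have := card1 v; lia.
Qed.

Lemma LR_excl v : Lp v -> Rp v -> False.
Proof.
move=> /existsP[a /andP[/eqP ea ha]] /existsP[b /andP[/eqP eb hb]].
have := two_del ha hb => e; subst; lia.
Qed.

Lemma propag (y : 'I_n) : 2 <= y -> Lp y -> forall k (z : 'I_n), nat_of_ord z = y + k -> Lp z.
Proof.
move=> y2 Ly; elim=> [|k IH] z hz.
  by have -> : z = y by apply: ord_inj; rewrite hz addn0.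
have lt : y + k < n by have := ltn_ord z; lia.
have Lz' := IH (Ordinal lt) erefl.
have := edge (u := Ordinal lt) (w := z) ltac:(simpl; lia) ltac:(simpl; lia).
case/orP => h.
  exfalso; apply: (@LR_excl (Ordinal lt)) => //.
  by apply/existsP; exists z; rewrite h /= hz addnS eqxx.
by apply/existsP; exists (Ordinal lt); rewrite h /= hz addnS eqxx.
Qed.

Lemma no_LR (y x : 'I_n) : 2 <= y -> y < x -> Lp y -> Rp x -> False.
Proof.
move=> y2 yx Ly Rx; apply: (@LR_excl x) => //.
by apply: (propag y2 Ly (k := x - y)); lia.
Qed.

Lemma free_L (x y : 'I_n) : 1 <= x -> x < y -> ~~ Rp x -> Lp y.
Proof.
move=> x1 xy nR.
have lt : x.+1 < n by have := ltn_ord y; lia.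
have := edge (u := x) (w := Ordinal lt) x1 erefl; case/orP => h.
  by move: nR; rewrite /Rp; case/existsP; exists (Ordinal lt); rewrite h /= eqxx.
have L1 : Lp (Ordinal lt) by apply/existsP; exists x; rewrite h /= eqxx.
apply: (propag (y := Ordinal lt) _ L1 (k := y - x.+1)) => /=; lia.
Qed.
End Propag.


Definition inreg (K P w : nat) := (P < w + K) && (w < P + K).
Definition gmap (f : bool) (p P w : nat) := if f then (p + P) - w else (p + w) - P.
Definition fmap (f : bool) (p P u : nat) := if f then (p + P) - u else (P + u) - p.

Section Region.
Variables (m r K p P : nat) (f : bool) (id' : 'I_m.+1 -> nat).
Local Notation n := m.+1.
Hypothesis hK : K = 2 * r + 3.
Hypothesis hp : 2 * K <= p. Hypothesis hp' : p + K < n.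
Hypothesis hP : 2 * K <= P. Hypothesis hP' : P + K < n.
Hypothesis iid' : injective id'.
Hypothesis hid' : forall w : 'I_n, inreg K P w -> id' w = gmap f p P w.

Lemma Gq_nat (u w : 'I_n) : Gq u w = [&& nat_of_ord u != w, u < w + 3 & w < u + 3].
Proof. by rewrite /Gq (inj_eq (@ord_inj n)) andbA. Qed.

Definition phi (u : 'I_n) : 'I_n := inord (fmap f p P u).

Lemma phi_val (u : 'I_n) : inreg K p u -> nat_of_ord (phi u) = fmap f p P u.
Proof. move=> h; rewrite /phi inordK // /fmap; move: h; rewrite /inreg; case: f; lia. Qed.

Lemma phi_reg (u : 'I_n) : inreg K p u -> inreg K P (phi u).
Proof. move=> h; rewrite /inreg phi_val // /fmap; move: h; rewrite /inreg; case: f; lia. Qed.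

Lemma phi_id (u : 'I_n) : inreg K p u -> id' (phi u) = u.
Proof.
move=> h; rewrite hid' ?phi_reg // phi_val // /gmap /fmap; move: h; rewrite /inreg; case: f; lia.
Qed.

Lemma C_reg (u : 'I_n) : (p <= u + 2 * r) -> (u <= p + 2 * r) ->
  Cg (@Gq n) (@T1q n) (@T2q n) (@nat_of_ord n) (@Gq n) (@T1q n) (@T2q n) id' phi u.
Proof.
move=> h1 h2.
have ru : inreg K p u by rewrite /inreg; lia.
have rw : forall w : 'I_n, Gq u w -> inreg K p w.
  by move=> w; rewrite /Gq /inreg => /andP[/andP[_ a] b]; lia.
split.
- exact: phi_id.
- apply: nbrs_map.
  + exact: ord_inj.
  + exact: iid'.
  + by move=> w /rw; exact: phi_id.
  + move=> w Guw; have := rw w Guw; move: Guw; rewrite !Gq_nat => Guw rw'.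
    rewrite !phi_val //; move: ru rw' Guw; rewrite /inreg /fmap.
    case: f => /= *; lia.
  + move=> y Gy.
    have ry : inreg K P y.
      move: Gy; rewrite Gq_nat phi_val //; move: ru; rewrite /inreg /fmap; case: f; lia.
    have lt : gmap f p P y < n by move: ry; rewrite /inreg /gmap; case: f; lia.
    exists (Ordinal lt).
      move: Gy; rewrite !Gq_nat phi_val //=.
      move: ru ry; rewrite /inreg /gmap /fmap /=; case: f => /= *; lia.
    apply: ord_inj; rewrite phi_val /=.
      by move: ry; rewrite /inreg /gmap /fmap; case: f; lia.
    by move: ry; rewrite /inreg /gmap; case: f; lia.
- move=> w Guw; have := rw w Guw => rw'; split; first exact: phi_id.
  + rewrite /T1q !phi_val //; move: ru rw' Guw; rewrite /inreg /fmap Gq_nat; case: f => /= *; apply/idP/idP; lia.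
  + rewrite /T2q !phi_val //; move: ru rw' Guw; rewrite /inreg /fmap Gq_nat; case: f => /= *; apply/idP/idP; lia.
Qed.

Lemma D_reg : forall k (u : 'I_n), (forall w : 'I_n, u <= w + 2 * k -> w <= u + 2 * k ->
  Cg (@Gq n) (@T1q n) (@T2q n) (@nat_of_ord n) (@Gq n) (@T1q n) (@T2q n) id' phi w) ->
  Dg (@Gq n) (@T1q n) (@T2q n) (@nat_of_ord n) (@Gq n) (@T1q n) (@T2q n) id' phi k u.
Proof.
elim=> [|k IH] u H /=; first by apply: H; lia.
split; first by apply: H; lia.
move=> w; rewrite Gq_nat => Guw; apply: IH => w' a b; apply: H; lia.
Qed.

Variables (S M : Type) (A : local_algo S M).
Let o := la_output A (@Gq n) (@T1q n) (@T2q n) (@nat_of_ord n) r.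
Let o' := la_output A (@Gq n) (@T1q n) (@T2q n) id' r.
Let DI := out_del (@Gq n) (@nat_of_ord n) o.
Let DI' := out_del (@Gq n) id' o'.

Lemma out_eq : o' (phi (inord p)) = o (inord p).
Proof.
rewrite /o /o' /la_output; congr la_out; apply: locality.
have vp : nat_of_ord (inord p : 'I_n) = p by rewrite inordK //; lia.
apply: D_reg => w a b; apply: C_reg; lia.
Qed.

Lemma transfer_L : Lp DI (inord p) ->
  (if f then Rp DI' (phi (inord p)) else Lp DI' (phi (inord p))).
Proof.
have vp : nat_of_ord (inord p : 'I_n) = p by rewrite inordK //; lia.
have rp : inreg K p (inord p : 'I_n) by rewrite /inreg vp; lia.
case/existsP => w /andP[/eqP ew]; rewrite /DI /out_del inE => /andP[Gw ow].
have rw : inreg K p w by rewrite /inreg; lia.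
have HD : phi w \in DI' (phi (inord p)).
  rewrite /DI' /out_del inE out_eq phi_id // ow andbT Gq_nat !phi_val //.
  move: rp rw; rewrite /inreg /fmap vp; case: f; lia.
have e1 := phi_val rw; have e2 := phi_val rp; move: e1 e2 HD; rewrite /fmap vp.
case: f => e1 e2 HD; apply/existsP; exists (phi w); rewrite HD andbT e1 e2;
  apply/eqP; move: rw; rewrite /inreg; lia.
Qed.

Lemma transfer_R : Rp DI (inord p) ->
  (if f then Lp DI' (phi (inord p)) else Rp DI' (phi (inord p))).
Proof.
have vp : nat_of_ord (inord p : 'I_n) = p by rewrite inordK //; lia.
have rp : inreg K p (inord p : 'I_n) by rewrite /inreg vp; lia.
case/existsP => w /andP[/eqP ew]; rewrite /DI /out_del inE => /andP[Gw ow].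
have rw : inreg K p w by rewrite /inreg; lia.
have HD : phi w \in DI' (phi (inord p)).
  rewrite /DI' /out_del inE out_eq phi_id // ow andbT Gq_nat !phi_val //.
  move: rp rw; rewrite /inreg /fmap vp; case: f; lia.
have e1 := phi_val rw; have e2 := phi_val rp; move: e1 e2 HD; rewrite /fmap vp.
case: f => e1 e2 HD; apply/existsP; exists (phi w); rewrite HD andbT e1 e2;
  apply/eqP; move: rw; rewrite /inreg; lia.
Qed.
End Region.


Lemma valid_props n (Ad D : 'I_n -> {set 'I_n}) :
  valid_step1 (@Gq n) (@T1q n) (@T2q n) Ad D ->
  (forall v, #|D v| <= 1) /\
  (forall u w : 'I_n, 1 <= u -> nat_of_ord w = u.+1 -> (w \in D u) || (u \in D w)).
Proof.
move=> [[_ c _ _ _] [_ eq]]; split=> // u w u1 ew.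
have := eq u w; rewrite /T1q /T2q ew eqxx orbT /=.
have -> : (nat_of_ord u == u.+1 + 2) = false by apply/eqP; lia.
have -> : (u.+1 == nat_of_ord u + 2) = false by apply/eqP; lia.
have -> : (nat_of_ord u + u.+1 == 1) = false by apply/eqP; lia.
by case: (u \in D w); case: (w \in D u).
Qed.

Definition idp (n K p q P1 P2 : nat) (f1 f2 : bool) (w : 'I_n) : nat :=
  if inreg K P1 w then gmap f1 p P1 w
  else if inreg K P2 w then gmap f2 q P2 w else n + w.

Lemma idp_inj n K p q P1 P2 f1 f2 : K <= p -> p + K <= n -> q + K <= n -> p + 2 * K <= q -> P1 + 2 * K <= P2 ->
  injective (@idp n K p q P1 P2 f1 f2).
Proof.
move=> a0 a b c d x y; rewrite /idp /inreg /gmap.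
have := ltn_ord x; have := ltn_ord y => hx hy.
case: f1; case: f2; case: ifP => h1; case: ifP => h2; try case: ifP => h3; try case: ifP => h4;
  move=> e; apply: ord_inj; lia.
Qed.

Section Main.
Variables (S M : Type) (A : local_algo S M) (T : nat -> nat).
Hypothesis Hs : solves_in A T.
Variable m : nat.
Local Notation n := m.+1.
Let r := T n.
Let K := 2 * r + 3.
Hypothesis hn : 10 * K < n.

Lemma inst_props (id : 'I_n -> nat) : injective id ->
  let D := out_del (@Gq n) id (la_output A (@Gq n) (@T1q n) (@T2q n) id r) in
  (forall v, #|D v| <= 1) /\
  (forall u w : 'I_n, 1 <= u -> nat_of_ord w = u.+1 -> (w \in D u) || (u \in D w)).
Proof.
move=> iid D; have [_ V] := Hs (@Gq_simple n) (@Gq_conn n) iid (@T1q_tree n) (@T2q_tree n).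
exact: valid_props V.
Qed.

Let DI := out_del (@Gq n) (@nat_of_ord n) (la_output A (@Gq n) (@T1q n) (@T2q n) (@nat_of_ord n) r).

Lemma pair_contra (p q : nat) : 2 * K <= p -> p + 3 * K <= q -> q + K < n ->
  Lp DI (inord p) || Rp DI (inord p) -> Lp DI (inord q) || Rp DI (inord q) -> False.
Proof.
move=> h1 h2 h3 np nq.
pose f1 := ~~ Lp DI (inord p). pose f2 := ~~ Rp DI (inord q).
pose P1 := 3 * K. pose P2 := 6 * K.
pose id' := @idp n K p q P1 P2 f1 f2.
have iid' : injective id' by apply: idp_inj; rewrite /P1 /P2; lia.
have hid1 : forall w : 'I_n, inreg K P1 w -> id' w = gmap f1 p P1 w.
  by move=> w hw; rewrite /id' /idp hw.
have hid2 : forall w : 'I_n, inreg K P2 w -> id' w = gmap f2 q P2 w.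
  move=> w hw; rewrite /id' /idp hw.
  have -> : inreg K P1 w = false by move: hw; rewrite /inreg /P1 /P2; lia.
  by [].
have hK : K = 2 * r + 3 by [].
have a1 : 2 * K <= p by lia.
have a2 : p + K < n by lia.
have a3 : 2 * K <= P1 by rewrite /P1; lia.
have a4 : P1 + K < n by rewrite /P1; lia.
have b1 : 2 * K <= q by lia.
have b3 : 2 * K <= P2 by rewrite /P2; lia.
have b4 : P2 + K < n by rewrite /P2; lia.
have [c1 e1] := inst_props iid'.
have LP : Lp (out_del (@Gq n) id' (la_output A (@Gq n) (@T1q n) (@T2q n) id' r))
             (phi p P1 f1 (inord p)).
  case Lpp : (Lp DI (inord p)) np => /= np.
    by have := transfer_L hK a1 a2 a3 a4 iid' hid1 Lpp; rewrite /f1 Lpp.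
  by have := transfer_R hK a1 a2 a3 a4 iid' hid1 np; rewrite /f1 Lpp.
have RP : Rp (out_del (@Gq n) id' (la_output A (@Gq n) (@T1q n) (@T2q n) id' r))
             (phi q P2 f2 (inord q)).
  case Rpq : (Rp DI (inord q)) nq => /= nq.
    by have := transfer_R hK b1 h3 b3 b4 iid' hid2 Rpq; rewrite /f2 Rpq.
  by have := transfer_L hK b1 h3 b3 b4 iid' hid2 (A := A) ltac:(by move: nq; rewrite orbF); rewrite /f2 Rpq.
have fm : forall f x X, fmap f x X x = X by move=> f x X; rewrite /fmap; case: f; lia.
have vp : nat_of_ord (inord p : 'I_n) = p by rewrite inordK //; lia.
have vq : nat_of_ord (inord q : 'I_n) = q by rewrite inordK //; lia.
have v1 : nat_of_ord (@phi m p P1 f1 (inord p)) = P1.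
  have := @phi_val m r K p P1 f1 hK a1 a2 a3 a4 (inord p); rewrite vp fm; apply; rewrite /inreg; lia.
have v2 : nat_of_ord (@phi m q P2 f2 (inord q)) = P2.
  have := @phi_val m r K q P2 f2 hK b1 h3 b3 b4 (inord q); rewrite vq fm; apply; rewrite /inreg; lia.
apply: (no_LR c1 e1 _ _ LP RP); rewrite v1 ?v2 /P1 /P2; lia.
Qed.

Lemma big_contra : False.
Proof.
have [c1 e1] := inst_props (@ord_inj n).
have v : forall k, k < n -> nat_of_ord (inord k : 'I_n) = k by move=> k hk; rewrite inordK.
have FL : forall x y, x < y -> y < n -> 1 <= x -> ~~ Rp DI (inord x) -> Lp DI (inord y).
  move=> x y xy yn x1 nR; apply: (free_L c1 e1 (x := inord x)) => //; rewrite ?v //; lia.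
have hK : 0 < K by rewrite /K; lia.
case Ha : (Lp DI (inord (3 * K)) || Rp DI (inord (3 * K))).
  case Hb : (Lp DI (inord (6 * K)) || Rp DI (inord (6 * K))).
    by apply: (pair_contra (p := 3 * K) (q := 6 * K)) => //; lia.
  apply: (pair_contra (p := 3 * K) (q := 9 * K)) => //; try lia.
  rewrite (FL (6 * K)) //; try lia; by move: Hb; case: (Rp _ _); rewrite ?orbT.
have nR : ~~ Rp DI (inord (3 * K)) by move: Ha; case: (Rp _ _); rewrite ?orbT.
apply: (pair_contra (p := 6 * K) (q := 9 * K)); try lia.
  by rewrite (FL (3 * K)) //; lia.
by rewrite (FL (3 * K)) //; lia.
Qed.
End Main.

Lemma bound S M (A : local_algo S M) T : solves_in A T -> forall n, n <= 20 * T n + 30.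
Proof.
move=> Hs n; case: (leqP n (20 * T n + 30)) => // h; exfalso.
case: n h => [|m] h; first lia.
apply: (big_contra Hs (m := m)); lia.
Qed.


Theorem mainTheorem1 :
  forall (S M : Type) (A : local_algo S M) (T : nat -> nat),
    solves_in A T ->
    exists c N : nat, 0 < c /\ forall n, N <= n -> n <= c * T n.
Proof.
move=> S M A T Hs; exists 50, 31; split => // n hn.
have := bound Hs n; lia.
Qed.
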